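(* If $X$ is a Baire space with a locally countable $\pi$-base, then \textsc{Bob} has a winning strategy in the game $\mathsf{BM}_\omega(X)$.
   Context: A Baire space is a space in which countable intersections of dense open sets are dense. A family $\mathcal{B}$ of non-empty open sets of $X$ is a $\pi$-base if every non-empty open set of $X$ contains a member of $\mathcal{B}$; it is locally countable if each member of $\mathcal{B}$ contains only countably many members of $\mathcal{B}$. The game $\mathsf{BM}_\omega(X)$: \textsc{Alice} plays a non-empty open set $A_0$; \textsc{Bob} plays a countable collection $\mathcal{B}_0$ of non-empty open subsets of $A_0$; in inning $n+1$, for each $B \in \mathcal{B}_n$ \textsc{Alice} plays a non-empty open set $A_B \subseteq B$, letting $\mathcal{A}_{n+1}=\{A_B : B\in\mathcal{B}_n\}$, and \textsc{Bob} plays a countable collection $\mathcal{B}_{n+1}$ of non-empty open subsets of $\bigcup\mathcal{A}_{n+1}$. \textsc{Bob} wins if $\bigcap_{n}\bigcup\mathcal{B}_n\neq\emptyset$, otherwise \textsc{Alice} wins. *)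

(* Defs.v *)
From HB Require Import structures.
From mathcomp Require Import all_boot.
From mathcomp Require Import boolp classical_sets cardinality topology.

Set Implicit Arguments.
Unset Strict Implicit.
Unset Printing Implicit Defensive.

Local Open Scope classical_set_scope.

Definition baire_space (T : topologicalType) : Prop :=
  forall U : nat -> set T, (forall n, open (U n) /\ dense (U n)) ->
    dense (\bigcap_n U n).

Definition pi_base (T : topologicalType) (B : set (set T)) : Prop :=
  (forall b, B b -> open b /\ b !=set0) /\
  (forall U, open U -> U !=set0 -> exists2 b, B b & b `<=` U).

Definition locally_countable (T : Type) (B : set (set T)) : Prop :=
  forall b, B b -> countable [set c | B c /\ c `<=` b].

(* A strategy for Bob: given Alice's first move A_0 and the list
   [f_1; ...; f_n] of Alice's later moves, it returns Bob's n-th move B_n.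
   Alice's move in inning n+1 is the assignment B |-> A_B, represented as a
   function f_{n+1} : set T -> set T (only its values on B_n matter). *)
Definition bob_strategy (T : topologicalType) :=
  set T -> seq (set T -> set T) -> set (set T).

Section Game.
Variables (T : topologicalType) (sigma : bob_strategy T)
  (A0 : set T) (fs : nat -> (set T -> set T)).

(* Bob's move B_n, where fs k is Alice's move in inning k+1 *)
Definition bob_move (n : nat) : set (set T) := sigma A0 (mkseq fs n).

Definition alice_coll (n : nat) : set (set T) := fs n @` bob_move n.

Definition alice_legal (n : nat) : Prop :=
  forall B, bob_move n B -> [/\ open (fs n B), fs n B !=set0 & fs n B `<=` B].

Definition bob_region (n : nat) : set T :=
  if n is m.+1 then \bigcup_(A in alice_coll m) A else A0.

Definition bob_legal (n : nat) : Prop :=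
  countable (bob_move n) /\
  (forall B, bob_move n B -> [/\ open B, B !=set0 & B `<=` bob_region n]).

End Game.

Definition bob_winning (T : topologicalType) (sigma : bob_strategy T) : Prop :=
  forall (A0 : set T), open A0 -> A0 !=set0 ->
  forall fs : nat -> (set T -> set T),
    (forall n, (forall k, (k < n)%N -> alice_legal sigma A0 fs k) ->
               bob_legal sigma A0 fs n) /\
    ((forall n, alice_legal sigma A0 fs n) ->
       \bigcap_n (\bigcup_(B in bob_move sigma A0 fs n) B) !=set0).

Definition bob_has_winning_strategy (T : topologicalType) : Prop :=
  exists sigma : bob_strategy T, bob_winning sigma.

(* Main.v *)
Require Import Defs.
From mathcomp Require Import all_boot.
From mathcomp Require Import boolp classical_sets cardinality topology.

Set Implicit Arguments.
Unset Strict Implicit.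
Unset Printing Implicit Defensive.
Local Open Scope classical_set_scope.

Section Aux.
Variables (T : topologicalType) (B : set (set T)) (ch : set T -> set T).

Fixpoint Mg (A0 : set T) (g : nat -> set T -> set T) (n : nat) : set (set T) :=
  match n with
  | 0 => [set c | B c /\ c `<=` ch A0]
  | m.+1 => [set c | B c /\ c `<=` ch A0 /\
              c `<=` \bigcup_(d in Mg A0 g m) g m d]
  end.

Lemma Mg_ext A0 g h n : (forall k, (k < n)%N -> g k = h k) -> Mg A0 g n = Mg A0 h n.
Proof.
elim: n => [//|n IH] H /=.
rewrite IH; last by move=> k kn; apply: H; apply: ltnW.
by rewrite H.
Qed.

Definition sig0 : bob_strategy T := fun A0 s => Mg A0 (fun k => nth id s k) (size s).

Lemma sig0_move A0 fs n : bob_move sig0 A0 fs n = Mg A0 fs n.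
Proof.
rewrite /bob_move /sig0 size_mkseq; apply: Mg_ext => k kn.
by rewrite nth_mkseq.
Qed.

End Aux.

Theorem theorem3p8 (X : topologicalType) :
  baire_space X ->
  (exists B : set (set X), pi_base B /\ locally_countable B) ->
  bob_has_winning_strategy X.
Proof.
move=> Hb [B [[Bop Bpi] Blc]].
have [ch Hch] : exists ch : set X -> set X, forall A, open A -> A !=set0 ->
    B (ch A) /\ ch A `<=` A.
  have H : forall A : set X, exists b, open A -> A !=set0 -> B b /\ b `<=` A.
    move=> A; case: (pselect (open A /\ A !=set0)) => [[oA nA]|nH].
      by have [b Bb bA] := Bpi A oA nA; exists b.
    by exists set0 => oA nA; exfalso; apply: nH.
  by have [ch Hc] := choice H; exists ch.
exists (sig0 B ch) => A0 oA0 nA0 fs.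
have [Bb0 b0A] := Hch A0 oA0 nA0.
set b0 := ch A0 in Bb0 b0A.
split.
  move=> n _; split.
    rewrite sig0_move; apply: (sub_countable (B := [set c | B c /\ c `<=` b0])).
      apply: subset_card_le; case: n => [|n] c /=; first by [].
      by move=> [Bc [cb _]].
    exact: Blc.
  move=> c; rewrite sig0_move => Hc.
  have Bc : B c by case: n Hc => [|n] [].
  have [oc nc] := Bop c Bc; split => //.
  case: n Hc => [|n] /= [_ Hc].
    exact: subset_trans Hc b0A.
  case: Hc => _ Hc x /Hc [d Md fx]; exists (fs n d) => //.
  by exists d => //; rewrite sig0_move.
move=> Hleg.
have P : forall n U, open U -> U !=set0 -> U `<=` b0 ->
    exists2 c, Mg B ch A0 fs n c & c `<=` U.
  elim=> [|n IH] U oU nU Ub.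
    have [c Bc cU] := Bpi U oU nU; exists c => //; split => //.
    exact: subset_trans cU Ub.
  have [c Mc cU] := IH U oU nU Ub.
  have [] := Hleg n c; first by rewrite sig0_move.
  move=> ofc nf fc.
  have [d Bd df] := Bpi _ ofc nf.
  have dU : d `<=` U by apply: subset_trans cU; apply: subset_trans fc.
  exists d => //; split => //; split; first exact: subset_trans Ub.
  by move=> x /df fx; exists c.
pose U n := \bigcup_(c in Mg B ch A0 fs n) c `|` ~` closure b0.
have HU : forall n, open (U n) /\ dense (U n).
  move=> n; split.
    apply: openU; first by apply: bigcup_open => c /=; case: n => [|n] [/Bop []].
    exact/closed_openC/closed_closure.
  move=> O nO oO.
  case: (pselect ((O `&` b0) !=set0)) => [nOb|nOb].
    have oOb : open (O `&` b0) by apply: openI => //; exact: (Bop _ Bb0).1.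
    have [c Mc cOb] := P n _ oOb nOb (@subIsetr _ _ _).
    have Bc : B c by case: n Mc => [|n] [].
    have [x cx] := (Bop c Bc).2.
    exists x; split; first by have [] := cOb x cx.
    by left; exists c.
  case: nO => x Ox; exists x; split => //; right => cl.
  have [y [b0y Oy]] := cl O (open_nbhs_nbhs (conj oO Ox)).
  by apply: nOb; exists y.
have [x [b0x Ux]] := Hb U HU b0 (Bop _ Bb0).2 (Bop _ Bb0).1.
exists x => n _.
case: (Ux n I) => [[c Mc cx]|nc]; last by exfalso; apply: nc; apply: subset_closure.
by exists c => //; rewrite sig0_move.
Qed.
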